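(* Let $k_1,k_2$ be positive integers with $k_1<k_2\le2k_1$, and set $\delta=k_2-k_1$. Let $\digamma_{k_1}^{k_2}$ be the $(\delta+1)\times(\delta+1)$ matrix whose $(i,j)$ entry is $\frac{1}{(k_1-i+j)!}$ for $1\le i,j\le\delta+1$. Then $$\det(\digamma_{k_1}^{k_2})=\frac{\delta!\,(\delta-1)!\cdots1!}{k_2!\,(k_2-1)!\cdots k_1!};$$ in particular $\digamma_{k_1}^{k_2}$ is invertible. *)

(* Defs.v *)
From mathcomp Require Import all_boot all_algebra.
Set Implicit Arguments. Unset Strict Implicit. Unset Printing Implicit Defensive.
Import GRing.Theory Num.Theory.
Local Open Scope ring_scope.

(* digamma k1 k2 : the (delta+1)x(delta+1) matrix over rat, delta = k2 - k1,
   entry (i,j) (0-indexed here; 1-indexed in the paper, the shift cancels)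
   equal to 1 / (k1 - i + j)!.  We write k1 + j - i in nat, which equals
   k1 - i + j whenever i <= k1 (true since i <= delta <= k1). *)
Definition digamma (k1 k2 : nat) : 'M[rat]_((k2 - k1).+1) :=
  \matrix_(i < (k2 - k1).+1, j < (k2 - k1).+1) ((k1 + j - i)`!%:R)^-1.

(* Main.v *)
Require Import Defs.
From mathcomp Require Import all_boot all_algebra.
From mathcomp Require Import zify.
Import GRing.Theory Num.Theory.
Local Open Scope ring_scope.

Lemma prod_diff_nat (n : nat) :
  (\prod_(0 <= i < n) \prod_(0 <= j < n | (i < j)%N) (j - i) =
   \prod_(0 <= i < n) i`!)%N.
Proof.
elim: n => [|n IH]; first by rewrite !big_geq.
rewrite [RHS]big_nat_recr //= -IH big_nat_recr //=.
rewrite [X in (_ * X)%N]big1_seq ?muln1; last first.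
  move=> j /andP[Hj]; rewrite mem_index_iota; lia.
rewrite (@eq_big_nat _ _ _ 0 n _
  (fun i => \prod_(0 <= j < n | (i < j)%N) (j - i) * (n - i))%N); last first.
  move=> i Hi; rewrite big_mkcond big_nat_recr //= -big_mkcond.
  by have -> : (i < n)%N by lia.
rewrite big_split /=; congr (_ * _)%N.
by rewrite -ffactnn ffact_prod big_mkord.
Qed.

Theorem theoremA2 (k1 k2 : nat) (hk1 : (0 < k1)%N) (hlt : (k1 < k2)%N)
  (hle : (k2 <= 2 * k1)%N) :
  \det (digamma k1 k2) =
    (\prod_(1 <= m < (k2 - k1).+1) (m`!)%:R) /
    (\prod_(k1 <= m < k2.+1) (m`!)%:R)
  /\ digamma k1 k2 \in unitmx.
Proof.
set n := (k2 - k1).+1.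
pose x : 'rV[rat]_n := \row_j ((k1 + j)%:R).
pose P (i : nat) : {poly rat} := \prod_(t <- iota 0 i) ('X - (t%:R)%:P).
have sizeP i : size (P i) = i.+1 by rewrite size_prod_XsubC size_iota.
pose L : 'M[rat]_n := \matrix_(i, k) (P i)`_k.
pose d : 'rV[rat]_n := \row_j (((k1 + j)`!)%:R)^-1.
have E : digamma k1 k2 = L *m Vandermonde n x *m diag_mx d.
  apply/matrixP => i j; rewrite mul_mx_diag !mxE.
  under eq_bigr do rewrite !mxE.
  rewrite -(@horner_coef_wide _ n); last by rewrite sizeP.
  have hi : (i <= k1)%N by have := ltn_ord i; rewrite /n; lia.
  rewrite horner_prod.
  rewrite (@eq_big_seq _ _ _ _ _ _ (fun t => ((k1 + j - t)%N)%:R)); last first.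
    move=> t; rewrite mem_iota => Ht; rewrite hornerXsubC natrB //; case/andP: Ht => _ Ht; rewrite add0n in Ht; exact: leq_trans (ltnW Ht) (leq_trans hi (leq_addr _ _)).
  rewrite -natr_prod (_ : (\prod_(t <- iota 0 i) (k1 + j - t) = (k1+j)^_i)%N); last by rewrite ffact_prod -(big_mkord xpredT (fun t => k1 + j - t)%N) /index_iota subn0.
  have hij : (i <= k1 + j)%N by lia.
  rewrite -[in RHS](ffact_fact hij) natrM invfM mulrA divff ?mul1r //.
  by rewrite pnatr_eq0 -lt0n ffact_gt0.
have detL : \det L = 1.
  rewrite det_trig; last first.
    apply/is_trig_mxP => i k lt; rewrite mxE nth_default // sizeP.
    exact: lt.
  apply: big1 => i _; rewrite mxE.
  have -> : (P i)`_i = lead_coef (P i) by rewrite lead_coefE sizeP.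
  exact: lead_coef_prod_XsubC.
have detV : \det (Vandermonde n x) = ((\prod_(1 <= m < n) m`!)%N)%:R.
  rewrite det_Vandermonde.
  rewrite (eq_bigr (fun i : 'I_n => \prod_(j < n | (i < j)%N) ((j - i)%N)%:R)); last first.
    move=> i _; apply: eq_bigr => j Hij; rewrite !mxE -natrB; last lia.
    congr (_%:R); lia.
  under eq_bigr do rewrite -natr_prod.
  rewrite -natr_prod; congr (_%:R).
  rewrite -(big_mkord xpredT (fun i => \prod_(j < n | (i < j)%N) (j - i))%N).
  under eq_big_nat => i Hi do rewrite -(big_mkord (fun j => (i < j)%N) (fun j => j - i)%N).
  rewrite prod_diff_nat big_ltn // fact0 mul1n; done.
have detD : \det (diag_mx d) = (((\prod_(k1 <= m < k2.+1) m`!)%N)%:R)^-1.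
  rewrite det_diag.
  under eq_bigr do rewrite mxE.
  rewrite prodfV -natr_prod; congr ((_%:R)^-1).
  rewrite -{1}(add0n k1) (big_addn 0 k2.+1 k1 xpredT (fun m => m`!)%N).
  have -> : (k2.+1 - k1 = n)%N by rewrite /n; lia.
  by rewrite big_mkord; apply: eq_bigr => i _; rewrite addnC.
have Hdet : \det (digamma k1 k2) =
    ((\prod_(1 <= m < n) m`!)%N)%:R / ((\prod_(k1 <= m < k2.+1) m`!)%N)%:R.
  by rewrite E !det_mulmx detL detV detD mul1r.
split.
  by rewrite Hdet !natr_prod.
rewrite unitmxE unitfE Hdet; apply: mulf_neq0; last rewrite invr_eq0;
  by rewrite pnatr_eq0 -lt0n; apply: prodn_gt0 => i; exact: fact_gt0.
Qed.
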